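(* Let $G=(V,E_1,\dots,E_k)$ be a complete edge-colored graph. Then the following statements are equivalent: (i) $G$ is a complete edge-colored permutation graph, i.e., there exists a labeling $\ell$ of $G$ such that for each monochromatic subgraph $G_{|i}$ of $G$, $(G_{|i},\ell)$ is a simple permutation graph. (ii) Each induced subgraph of $G$ is a complete edge-colored permutation graph. (iii) For each strong module $M$ of $G$, the quotient graph $G[M]/\mathbb{P}_{\max}(M)$ is a complete edge-colored permutation graph. (iv) For each strong prime module $M$ of $G$, the quotient graph $G[M]/\mathbb{P}_{\max}(M)$ is a complete edge-colored permutation graph; in particular, the quotient graph of each strong prime module on at least three vertices is $2$-edge-colored. (v) Each monochromatic subgraph $G_{|i}$ of $G$, together with some labeling (possibly depending on $i$ and different from the one in (i)), is a simple permutation graph, and $G$ does not contain a rainbow triangle.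
   Context: All graphs are finite, simple and undirected; $[n]=\{1,\dots,n\}$. A permutation of length $n$ is a bijection $\pi:[n]\to[n]$. A labeling of a graph with vertex set $V$ is a bijection $\ell:V\to[|V|]$. A graph $H=(V,E)$ together with a labeling $\ell$ is a (simple) permutation graph of a permutation $\pi$ of length $|V|$ if for all $u,v\in V$ with $\ell(u)>\ell(v)$: $\{u,v\}\in E$ iff $\pi^{-1}(\ell(u))<\pi^{-1}(\ell(v))$; $H$ is a simple permutation graph if such $\ell,\pi$ exist. A complete $k$-edge-colored graph $G=(V,E_1,\dots,E_k)$ is the complete graph on $V$ whose edge set is partitioned into $k$ nonempty color classes $E_1,\dots,E_k$ (edge $e\in E_i$ has color $i$); the one-vertex graph is also regarded as a complete edge-colored graph. The $i$-th monochromatic subgraph is $G_{|i}=(V,E_i)$. Induced subgraphs keep the colors of their edges (and may use fewer colors). $G$ is a complete edge-colored permutation graph if there are a labeling $\ell$ and permutations $\pi_1,\dots,\pi_k$ such that $(G_{|i},\ell)$ is a simple permutation graph of $\pi_i$ for each $i$. A rainbow triangle is a set of three vertices whose three edges have pairwise distinct colors. A module of $G$ is a set $M\subseteq V$ such that for every $v\in V\setminus M$ all edges $\{u,v\}$ with $u\in M$ have the same color. A strong module is a nonempty module $M$ such that every module $M'$ satisfies $M\subseteq M'$, $M'\subseteq M$ or $M\cap M'=\emptyset$. For a strong module $M$ with $|M|\ge 2$, $\mathbb{P}_{\max}(M)$ is the set of inclusion-maximal strong modules properly contained in $M$ (it partitions $M$); the quotient graph $G[M]/\mathbb{P}_{\max}(M)$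 is the complete graph on vertex set $\mathbb{P}_{\max}(M)$ in which the edge $\{M_a,M_b\}$ gets the (common) color of all edges $\{u,v\}$ with $u\in M_a$, $v\in M_b$. For $|M|=1$ the quotient graph is the one-vertex graph. A strong module $M$ is series if its quotient graph has at least two vertices and all its edges have the same color, and prime otherwise. *)

(* Defs.v *)
From mathcomp Require Import all_boot all_fingroup.
Set Implicit Arguments. Unset Strict Implicit. Unset Printing Implicit Defensive.

Section Defs.
Variable T : finType.
(* A complete edge-colored graph on vertex set T: each unordered pair {u,v},
   u <> v, gets the colour c u v (a natural number); c is symmetric.
   Values on the diagonal are irrelevant. The colours of G are the colours
   actually used by some edge. *)
Variable c : T -> T -> nat.

Definition color_used (S : {set T}) (i : nat) : Prop :=
  exists u v, [/\ u \in S, v \in S, u != v & c u v = i].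

Definition ncolors (S : {set T}) : nat :=
  size (undup [seq c p.1 p.2 | p <- [seq p <- enum (setX S S) | p.1 != p.2]]).

Definition labeling (S : {set T}) (l : T -> 'I_#|S|) : Prop :=
  {in S &, injective l}.

Definition perm_graph_of (S : {set T}) (e : rel T) (l : T -> 'I_#|S|)
  (pi : {perm 'I_#|S|}) : Prop :=
  forall u v, u \in S -> v \in S -> l v < l u ->
    e u v = ((pi^-1)%g (l u) < (pi^-1)%g (l v)).

Definition simple_perm_graph (S : {set T}) (e : rel T) : Prop :=
  exists l, labeling l /\ exists pi, @perm_graph_of S e l pi.

Definition mono (i : nat) : rel T := fun u v => (u != v) && (c u v == i).

Definition ecpg (S : {set T}) : Prop :=
  exists l, labeling l /\
    forall i, color_used S i -> exists pi, @perm_graph_of S (mono i) l pi.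

Definition rainbow_triangle : Prop :=
  exists u v w : T, [/\ u != v, v != w, u != w &
    [/\ c u v != c v w, c v w != c u w & c u v != c u w]].

Definition module (M : {set T}) : bool :=
  [forall v in ~: M, forall u in M, forall u' in M, c u v == c u' v].

Definition strong_module (M : {set T}) : bool :=
  (M != set0) && module M &&
  [forall M' : {set T}, module M' ==>
     [|| M \subset M', M' \subset M | [disjoint M & M']]].

Definition Pmax (M : {set T}) : {set {set T}} :=
  [set N | [&& strong_module N, N \proper M &
     [forall N' : {set T}, [&& strong_module N', N' \proper M & N \subset N']
        ==> (N' == N)]]].

Definition qverts (M : {set T}) : {set {set T}} :=
  if #|M| == 1 then [set M] else Pmax M.

End Defs.

Definition qcol (T : finType) (c : T -> T -> nat) (A B : {set T}) : nat :=
  match [pick x in A], [pick y in B] with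
  | Some x, Some y => c x y
  | _, _ => 0
  end.

Definition series_module (T : finType) (c : T -> T -> nat) (M : {set T}) : bool :=
  strong_module c M && (2 <= #|qverts c M|) &&
  [forall A in qverts c M, forall B in qverts c M, forall A' in qverts c M,
     forall B' in qverts c M,
       (A != B) ==> (A' != B') ==> (qcol c A B == qcol c A' B')].

Definition prime_module (T : finType) (c : T -> T -> nat) (M : {set T}) : bool :=
  strong_module c M && ~~ series_module c M.

(* Main.v *)
Require Import Defs.
From mathcomp Require Import all_boot all_fingroup zify.
From Stdlib Require Import Classical ClassicalEpsilon.
Set Implicit Arguments. Unset Strict Implicit. Unset Printing Implicit Defensive.


Lemma core3 (a b e i : nat) (x y z : nat) :
 x != y -> y != z -> x != z ->
 (x < y -> y < z -> e = a \/ e = b) ->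
 (x < z -> z < y -> a = e \/ a = b) ->
 (y < x -> x < z -> b = a \/ b = e) ->
 (y < z -> z < x -> a = b \/ a = e) ->
 (z < x -> x < y -> b = e \/ b = a) ->
 (z < y -> y < x -> e = b \/ e = a) ->
 (if x < y then a != i else a == i) -> (if y < z then b != i else b == i) -> (if x < z then e != i else e == i).
Proof.
move=> nxy nyz nxz H1 H2 H3 H4 H5 H6.
case: (ltnP x y) => hxy; case: (ltnP y z) => hyz; case: (ltnP x z) => hxz Ha Hb.
all: try (have := H1 ltac:(lia) ltac:(lia)); try (have := H2 ltac:(lia) ltac:(lia));
 try (have := H3 ltac:(lia) ltac:(lia)); try (have := H4 ltac:(lia) ltac:(lia));
 try (have := H5 ltac:(lia) ltac:(lia)); try (have := H6 ltac:(lia) ltac:(lia)); lia.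
Qed.

Section Gen.
Variable X : finType.
Variable col : X -> X -> nat.
Hypothesis sym : forall u v, col u v = col v u.

Definition good (S : {set X}) (f : X -> nat) :=
  {in S &, injective f} /\
  forall u v w, u \in S -> v \in S -> w \in S -> f u < f v -> f v < f w ->
    col u w = col u v \/ col u w = col v w.

Lemma ecpg_good (S : {set X}) : ecpg col S -> exists f, good S f.
Proof.
case=> l [Hl H]; exists (fun x => nat_of_ord (l x)); split.
  by move=> x y xS yS /val_inj /Hl; apply.
move=> u v w uS vS wS luv lvw.
have uw : u != w.
  by apply/eqP=> E; subst w; move: (ltn_trans luv lvw); rewrite ltnn.
have [pi Hpi] := H (col u w) (ex_intro _ u (ex_intro _ w (And4 uS wS uw erefl))).
case: (eqVneq (col u v) (col u w)) => [->|h1]; first by left.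
case: (eqVneq (col v w) (col u w)) => [->|h2]; first by right.
exfalso.
have e1 := Hpi w u wS uS (ltn_trans luv lvw).
have e2 := Hpi v u vS uS luv. have e3 := Hpi w v wS vS lvw.
have m1 : mono col (col u w) w u by rewrite /mono eq_sym uw (sym w u) eqxx.
have m2 : mono col (col u w) v u = false by rewrite /mono (sym v u) (negbTE h1) andbF.
have m3 : mono col (col u w) w v = false by rewrite /mono (sym w v) (negbTE h2) andbF.
rewrite m1 in e1; rewrite m2 in e2; rewrite m3 in e3.
move: e1 e2 e3; set pu := (pi^-1)%g (l u); set pv := (pi^-1)%g (l v);
  set pw := (pi^-1)%g (l w).
move=> e1 e2 e3. have h1' : pw < pu by rewrite -e1.
have h2' : ~~ (pv < pu) by rewrite -e2.
have h3' : ~~ (pw < pv) by rewrite -e3.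
lia.
Qed.

Definition rk (S : {set X}) (f : X -> nat) x := #|[set y in S | f y < f x]|.

Lemma rk_lt (S : {set X}) (f : X -> nat) (x y : X) : x \in S -> f x < f y -> rk S f x < rk S f y.
Proof.
move=> xS lt; apply: proper_card; apply/properP; split.
  apply/subsetP=> z; rewrite !inE => /andP[-> h]; exact: ltn_trans h lt.
by exists x; rewrite !inE ?xS ?lt ?ltnn.
Qed.

Lemma rk_bound (S : {set X}) (f : X -> nat) (x : X) : x \in S -> rk S f x < #|S|.
Proof.
move=> xS; apply: proper_card; apply/properP; split.
  by apply/subsetP=> z; rewrite !inE => /andP[-> h].
by exists x; rewrite ?inE ?xS ?ltnn.
Qed.

Lemma rk_ltE (S : {set X}) (f : X -> nat) (x y : X) : {in S &, injective f} -> x \in S -> y \in S ->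
  (rk S f x < rk S f y) = (f x < f y).
Proof.
move=> inj xS yS; apply/idP/idP; last exact: rk_lt.
move=> h; case: (ltngtP (f x) (f y)) => // h2.
  by have := rk_lt yS h2; lia.
by move: (inj x y xS yS h2) h => ->; rewrite ltnn.
Qed.

Lemma good_rk (S : {set X}) (f : X -> nat) : good S f -> good S (rk S f).
Proof.
case=> inj H; split.
  move=> x y xS yS E; apply: inj => //.
  case: (ltngtP (f x) (f y)) => // h.
    by have := rk_lt xS h; rewrite E ltnn.
  by have := rk_lt yS h; rewrite E ltnn.
move=> u v w uS vS wS; rewrite !rk_ltE //; exact: H.
Qed.

Lemma perm_from_order (S : {set X}) (l : X -> 'I_#|S|) (prec : rel X) :
  {in S &, injective l} ->
  (forall x, x \in S -> ~~ prec x x) ->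
  (forall x y z, x \in S -> y \in S -> z \in S -> prec x y -> prec y z -> prec x z) ->
  (forall x y, x \in S -> y \in S -> x != y -> prec x y || prec y x) ->
  exists pi : {perm 'I_#|S|}, forall u v, u \in S -> v \in S ->
     prec u v = ((pi^-1)%g (l u) < (pi^-1)%g (l v)).
Proof.
move=> linj irr tr tot.
have surj : forall k : 'I_#|S|, exists2 x, x \in S & l x = k.
  move=> k; have : l @: S = setT.
    by apply/eqP; rewrite eqEcard subsetT cardsT card_ord (card_in_imset linj) leqnn.
  move=> E; have : k \in l @: S by rewrite E inE.
  by case/imsetP=> x xS ->; exists x.
pose R x := #|[set y in S | prec y x]|.
have Rlt : forall x y, x \in S -> y \in S -> prec x y -> R x < R y.
  move=> x y xS yS pxy; apply: proper_card; apply/properP; split.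
    apply/subsetP=> z; rewrite !inE => /andP[zS pz]; rewrite zS /=.
    exact: tr pz pxy.
  by exists x; rewrite !inE ?xS ?pxy ?irr.
have RE : forall x y, x \in S -> y \in S -> prec x y = (R x < R y).
  move=> x y xS yS; apply/idP/idP; first exact: Rlt.
  move=> h; case: (eqVneq x y) => [E|nxy]; first by subst y; rewrite ltnn in h.
  case/orP: (tot x y xS yS nxy) => // pyx.
  by have := Rlt _ _ yS xS pyx; lia.
have Rb : forall x, x \in S -> R x < #|S|.
  move=> x xS; apply: proper_card; apply/properP; split.
    by apply/subsetP=> z; rewrite !inE => /andP[].
  by exists x; rewrite ?inE ?xS ?irr.
pose g (k : 'I_#|S|) : 'I_#|S| :=
  insubd k #|[set y in S | [exists x in S, (l x == k) && prec y x]]|.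
have gE : forall x, x \in S -> val (g (l x)) = R x.
  move=> x xS; rewrite /g.
  have -> : [set y in S | [exists x0 in S, (l x0 == l x) && prec y x0]] =
            [set y in S | prec y x].
    apply/setP=> y; rewrite !inE; case: (y \in S) => //=.
    apply/existsP/idP.
      by case=> x0 /andP[x0S /andP[/eqP /linj -> //]].
    by move=> h; exists x; rewrite xS eqxx h.
  by rewrite val_insubd Rb.
have ginj : injective g.
  move=> k1 k2; have [x1 x1S <-] := surj k1; have [x2 x2S <-] := surj k2.
  move=> /(congr1 val); rewrite !gE // => E.
  case: (eqVneq x1 x2) => [->//|n12].
  by case/orP: (tot _ _ x1S x2S n12) => /Rlt; rewrite E ltnn; [move/(_ x1S x2S)|move/(_ x2S x1S)].
exists (perm ginj)^-1%g => u v uS vS.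
by rewrite invgK !permE RE // -!gE.
Qed.

Lemma good_ecpg (S : {set X}) (f : X -> nat) : 0 < #|S| -> good S f -> ecpg col S.
Proof.
move=> S0 gf; have [inj H] := good_rk gf.
set r := rk S f.
pose l x : 'I_#|S| := insubd (Ordinal S0) (r x).
have lE : forall x, x \in S -> nat_of_ord (l x) = r x.
  by move=> x xS; rewrite /l val_insubd rk_bound.
exists l; split.
  move=> x y xS yS /(congr1 val) /=; rewrite !lE //; exact: inj.
move=> i _.
pose prec (x y : X) := (x != y) && (if l x < l y then col x y != i else col x y == i).
have linj : {in S &, injective l}.
  move=> x y xS yS /(congr1 val) /=; rewrite !lE //; exact: inj.
have irr : forall x, x \in S -> ~~ prec x x.
  by move=> x _; rewrite /prec eqxx.
have tot : forall x y, x \in S -> y \in S -> x != y -> prec x y || prec y x.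
  move=> x y xS yS nxy; rewrite /prec nxy (eq_sym y x) nxy /= (sym y x).
  case: (ltngtP (l x) (l y)) => h.
  + by rewrite orbC; case: (col x y == i).
  + by case: (col x y == i).
  + by move: (linj _ _ xS yS (val_inj h)) nxy => ->; rewrite eqxx.
have tr : forall x y z, x \in S -> y \in S -> z \in S -> prec x y -> prec y z -> prec x z.
  move=> x y z xS yS zS /andP[nxy pxy] /andP[nyz pyz].
  have nxz : x != z.
    apply/eqP=> E; subst z; move: pxy pyz; rewrite (sym y x).
    case: (ltngtP (l x) (l y)) => h.
    + by move=> /negbTE ->.
    + by move=> /eqP ->; rewrite eqxx.
    + by move: (linj _ _ xS yS (val_inj h)) nxy => ->; rewrite eqxx.
  rewrite /prec nxz /=.
  have Hl : forall a b d, a \in S -> b \in S -> d \in S -> l a < l b -> l b < l d ->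
     col a d = col a b \/ col a d = col b d.
    move=> a b d aS bS dS; rewrite !lE //; exact: H.
  have lnxy : nat_of_ord (l x) != l y by apply/eqP=> /val_inj /linj E; rewrite E ?eqxx in nxy.
  have lnyz : nat_of_ord (l y) != l z by apply/eqP=> /val_inj /linj E; rewrite E ?eqxx in nyz.
  have lnxz : nat_of_ord (l x) != l z by apply/eqP=> /val_inj /linj E; rewrite E ?eqxx in nxz.
  apply: (core3 lnxy lnyz lnxz _ _ _ _ _ _ pxy pyz).
  + by move=> h1 h2; have := Hl x y z xS yS zS h1 h2; rewrite ?(sym y x) ?(sym z y) ?(sym z x); lia.
  + by move=> h1 h2; have := Hl x z y xS zS yS h1 h2; rewrite ?(sym y x) ?(sym z y) ?(sym z x); lia.
  + by move=> h1 h2; have := Hl y x z yS xS zS h1 h2; rewrite ?(sym y x) ?(sym z y) ?(sym z x); lia.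
  + by move=> h1 h2; have := Hl y z x yS zS xS h1 h2; rewrite ?(sym y x) ?(sym z y) ?(sym z x); lia.
  + by move=> h1 h2; have := Hl z x y zS xS yS h1 h2; rewrite ?(sym y x) ?(sym z y) ?(sym z x); lia.
  + by move=> h1 h2; have := Hl z y x zS yS xS h1 h2; rewrite ?(sym y x) ?(sym z y) ?(sym z x); lia.
have [pi Hpi] := perm_from_order linj irr tr tot.
exists pi => u v uS vS luv; rewrite -Hpi // /prec /mono.
by rewrite ltnNge (ltnW luv).
Qed.

End Gen.


Section Gen2.
Variable X : finType.
Variable col : X -> X -> nat.
Hypothesis sym : forall u v, col u v = col v u.
Implicit Types (S W D E : {set X}) (i j : nat) (x : X).

Lemma perm_TC (S : {set X}) (e : rel X) (l : X -> 'I_#|S|) pi :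
  perm_graph_of e l pi -> forall u v w, u \in S -> v \in S -> w \in S ->
  l u < l v -> l v < l w ->
  (e v u -> e w v -> e w u) /\ (~~ e v u -> ~~ e w v -> ~~ e w u).
Proof.
move=> H u v w uS vS wS h1 h2.
rewrite (H v u vS uS h1) (H w v wS vS h2) (H w u wS uS (ltn_trans h1 h2)); split; lia.
Qed.

Definition norb (S : {set X}) := forall u v w, u \in S -> v \in S -> w \in S ->
  u != v -> v != w -> u != w ->
  col u v = col v w \/ col v w = col u w \/ col u v = col u w.

Lemma norb_sub S (S' : {set X}) : S' \subset S -> norb S -> norb S'.
Proof.
move=> /subsetP sub nr u v w uS vS wS; apply: nr; exact: sub.
Qed.

Definition closedb (S : {set X}) i (D : {set X}) :=
  [forall u in D, forall w in S, (w \notin D) ==> (col u w != i)].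

Lemma closedP S i D : reflect (forall u w, u \in D -> w \in S -> w \notin D -> col u w != i)
  (closedb S i D).
Proof.
apply: (iffP idP).
  move=> /forall_inP H u w uD wS wD.
  by have /forall_inP /(_ w wS) /implyP := H u uD; apply.
move=> H; apply/forall_inP=> u uD; apply/forall_inP=> w wS; apply/implyP; exact: H.
Qed.

Lemma closedI S i D1 D2 : closedb S i D1 -> closedb S i D2 -> closedb S i (D1 :&: D2).
Proof.
move=> /closedP h1 /closedP h2; apply/closedP=> u w; rewrite !inE => /andP[u1 u2] wS.
by rewrite negb_and => /orP[]; [exact: h1|exact: h2].
Qed.

Lemma closedC S i D : closedb S i D -> closedb S i (S :\: D).
Proof.
move=> /closedP h; apply/closedP=> u w; rewrite !inE => /andP[uD uS] wS.
rewrite wS andbT negbK => wD; rewrite sym; exact: h.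
Qed.

Lemma closedT S i : closedb S i S.
Proof. by apply/closedP=> u w _ ->. Qed.

Definition modS (S W : {set X}) := forall z a a', z \in S -> z \notin W -> a \in W -> a' \in W ->
  col a z = col a' z.

Lemma comp_ex S i x : norb S -> x \in S -> exists W : {set X},
  [/\ W \subset S, x \in W, closedb S i W,
      (forall D, D \subset S -> closedb S i D -> x \in D -> W \subset D) & modS S W].
Proof.
move=> nr xS.
pose P (D : {set X}) := [&& D \subset S, closedb S i D & x \in D].
have PS : P S by rewrite /P subxx xS closedT.
case: (arg_minnP (fun D : {set X} => #|D|) PS) => W /and3P[WS Wc xW] Wmin.
have Wsub : forall D, D \subset S -> closedb S i D -> x \in D -> W \subset D.
  move=> D DS Dc xD.
  have PI : P (W :&: D).
    by rewrite /P (subset_trans (subsetIl _ _) WS) closedI // inE xW xD.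
  have le := Wmin _ PI.
  by apply/setIidPl; apply/eqP; rewrite eqEcard subsetIl le.
exists W; split => //.
move=> z a a' zS zW aW a'W.
pose D' := [set y in W | col y z == col x z].
have D'S : D' \subset S.
  by apply: subset_trans WS; apply/subsetP=> y; rewrite inE => /andP[].
have D'c : closedb S i D'.
  apply/closedP => y w; rewrite !inE => /andP[yW /eqP yz] wS.
  case: (boolP (w \in W)) => wW /=; last by move=> _; move/closedP: Wc; apply.
  move=> /eqP wz; apply/eqP => yw.
  have cyz : col y z != i by move/closedP: Wc; apply.
  have cwz : col w z != i by move/closedP: Wc; apply.
  have nyw : y != w by apply/eqP=> E; subst w; apply: wz; exact: yz.
  have nyz : y != z by apply/eqP=> E; subst z; rewrite yW in zW.
  have nwz : w != z by apply/eqP=> E; subst z; rewrite wW in zW.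
  have yS : y \in S by move/subsetP: WS; apply.
  case: (nr y w z yS wS zS nyw nwz nyz) => [h|[h|h]].
  - by rewrite -h yw eqxx in cwz.
  - by apply: wz; rewrite h.
  - by rewrite -h yw eqxx in cyz.
have sub := Wsub D' D'S D'c.
have : x \in D' by rewrite inE xW eqxx.
move=> /sub /subsetP sub'.
have := sub' a aW; have := sub' a' a'W; rewrite !inE => /andP[_ /eqP ->] /andP[_ /eqP ->].
by [].
Qed.

Definition three S := exists i j k, [/\ color_used col S i, color_used col S j,
  color_used col S k & [/\ i != j, j != k & i != k]].
Definition conn S i := forall D, D \subset S -> closedb S i D -> D = set0 \/ D = S.

Lemma used_sub S (S' : {set X}) i : S' \subset S -> color_used col S' i -> color_used col S i.
Proof.
move=> /subsetP sub [u [v [uS vS uv h]]]; exists u, v; split => //; exact: sub.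
Qed.

Lemma sees S i x : conn S i -> color_used col S i -> x \in S ->
  exists y, [/\ y \in S, y != x & col x y = i].
Proof.
move=> cn [u [v [uS vS uv cuv]]] xS.
case: (boolP [exists y in S, (y != x) && (col x y == i)]).
  by case/exists_inP => y yS /andP[yx /eqP h]; exists y.
move=> /exists_inPn H; exfalso.
have : closedb S i [set x].
  apply/closedP=> a w; rewrite inE => /eqP -> wS; rewrite inE => wx.
  by have := H w wS; rewrite wx.
move=> /(cn _ _) []; first by rewrite sub1set.
  by move/setP/(_ x); rewrite !inE eqxx.
move=> E; move: uS vS uv; rewrite -E !inE => /eqP -> /eqP ->; by rewrite eqxx.
Qed.

Lemma gallai_core n : forall S : {set X}, #|S| <= n -> norb S ->
  (forall i, color_used col S i -> conn S i) -> ~ three S.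
Proof.
elim: n => [|n IH] S Sn nr cn [r1 [r2 [r3 [u1 u2 u3 [n12 n23 n13]]]]].
  case: u1 => u [v [uS _ _ _]]; move: Sn; rewrite leqn0 => /eqP/cards0_eq S0.
  by rewrite S0 inE in uS.
have [v vS] : exists v, v \in S by case: u1 => u [w [uS _ _ _]]; exists u.
have [y1 [y1S y1v c1]] := sees (cn _ u1) u1 vS.
have [y2 [y2S y2v c2]] := sees (cn _ u2) u2 vS.
have [y3 [y3S y3v c3]] := sees (cn _ u3) u3 vS.
set S' := S :\ v.
have S'S : S' \subset S by apply: subD1set.
have nr' : norb S' := norb_sub S'S nr.
have usedS' : forall r, color_used col S r -> color_used col S' r.
  move=> r ur.
  have [y [yS yv cy]] : exists y, [/\ y \in S, y != v & col v y != r].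
    case: (eqVneq r r1) => [->|nr1].
      by exists y2; rewrite y2S y2v c2 eq_sym n12.
    by exists y1; rewrite y1S y1v c1 eq_sym nr1.
  have [w [wS wy cw]] := sees (cn _ ur) ur yS.
  exists y, w; split => //.
  - by rewrite !inE yv yS.
  - rewrite !inE wS andbT; apply/eqP=> E; subst w; by rewrite sym cw eqxx in cy.
  - by rewrite eq_sym.
have three' : three S'.
  by exists r1, r2, r3; split; try apply: usedS'.
have S'n : #|S'| <= n.
  by move: Sn; rewrite (cardsD1 v S) vS.
have [red [ured ncr]] : exists red, color_used col S' red /\ ~ conn S' red.
  apply: NNPP => h; apply: (IH S' S'n nr' _ three') => i ui; apply: NNPP => nc.
  by apply: h; exists i.
have [D [DS Dc D0 DS']] : exists D, [/\ D \subset S', closedb S' red D, D != set0 & D != S'].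
  apply: NNPP => h; apply: ncr => D DS Dc.
  case: (eqVneq D set0) => [->|D0]; first by left.
  case: (eqVneq D S') => [->|D1]; first by right.
  by exfalso; apply: h; exists D.
have uredS := used_sub S'S ured.
have cnr := cn _ uredS.
have vS' : v \notin S' by rewrite !inE eqxx.
have nbr : forall E, E \subset S' -> closedb S' red E -> E != set0 ->
    exists2 x, x \in E & col v x = red.
  move=> E ES Ec E0.
  have ES0 : E \subset S := subset_trans ES S'S.
  case: (boolP (closedb S red E)) => Ec2.
    case: (cnr E ES0 Ec2) => h; first by rewrite h eqxx in E0.
    by move/subsetP: ES => /(_ v); rewrite h vS => /(_ isT); rewrite (negbTE vS').
  apply: NNPP => hx; apply: (negP Ec2); apply/closedP => a w aE wS wE; apply/eqP => caw.
  case: (eqVneq w v) => [wv|wv].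
    by subst w; apply: hx; exists a => //; rewrite sym.
  have wS' : w \in S' by rewrite !inE wv wS.
  by move/closedP: Ec => /(_ a w aE wS' wE); rewrite caw eqxx.
have outW : forall y W, y \in W -> W \subset S' -> closedb S' red W ->
    (forall D, D \subset S' -> closedb S' red D -> y \in D -> W \subset D) ->
    exists2 x, x \in S' :\: W & col v x = red.
  move=> y W yW WS Wc Wmin.
  apply: nbr; first exact: subsetDl.
    exact: closedC.
  have yS' : y \in S' by move/subsetP: WS; apply.
  case: (boolP (y \in D)) => yD.
    have WD := Wmin D DS Dc yD.
    have [x xS' xD] : exists2 x, x \in S' & x \notin D.
      have : D \proper S' by rewrite properEneq DS DS'.
      by case/properP=> _ [x xS' xD]; exists x.
    apply/set0Pn; exists x; rewrite in_setD xS' andbT.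
    by apply: contra xD; move/subsetP: WD; apply.
  have yD' : y \in S' :\: D by rewrite in_setD yD yS'.
  have WD := Wmin (S' :\: D) (subsetDl _ _) (closedC Dc) yD'.
  case/set0Pn: D0 => x xD; apply/set0Pn; exists x.
  have xS' : x \in S' by move/subsetP: DS; apply.
  rewrite in_setD xS' andbT; apply/negP => xW.
  by move/subsetP: WD => /(_ x xW); rewrite !inE xD.
have lemA : forall y W x, y \in S' -> col v y != red -> y \in W -> closedb S' red W ->
    x \in S' :\: W -> col v x = red -> col v y = col y x.
  move=> y W x yS' cy yW Wc; rewrite !inE => /andP[xW /andP[xv xS]] cx.
  have yS : y \in S by move/subsetP: S'S; apply.
  have vy : v != y by apply/eqP=> E; subst y; rewrite (negbTE vS') in yS'.
  have yx : y != x by apply/eqP=> E; subst x; rewrite yW in xW.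
  have cyx : col y x != red.
    by move/closedP: Wc; apply => //; rewrite !inE xv xS.
  have vx : v != x by rewrite eq_sym.
  case: (nr v y x vS yS xS vy yx vx) => [//|[h|h]].
    by rewrite h cx eqxx in cyx.
  by rewrite h cx eqxx in cy.
have main : forall y y', y \in S' -> y' \in S' -> col v y != red -> col v y' != red ->
    col v y = col v y'.
  move=> y y' yS' y'S' cy cy'.
  have [W [WS yW Wc Wmin Wmod]] := comp_ex red nr' yS'.
  have [W' [W'S y'W' W'c W'min W'mod]] := comp_ex red nr' y'S'.
  case: (boolP (y' \in W)) => y'W.
    have [x xW cx] := outW y W yW WS Wc Wmin.
    have W'W := W'min W WS Wc y'W.
    have xW' : x \in S' :\: W'.
      move: xW; rewrite !in_setD => /andP[xW ->]; rewrite andbT.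
      by apply: contra xW; move/subsetP: W'W; apply.
    rewrite (lemA y W x yS' cy yW Wc xW cx) (lemA y' W' x y'S' cy' y'W' W'c xW' cx).
    move: xW; rewrite in_setD => /andP[xW xS']; exact: Wmod.
  have y'W2 : y' \in S' :\: W by rewrite in_setD y'W y'S'.
  have W'D := W'min (S' :\: W) (subsetDl _ _) (closedC Wc) y'W2.
  have W'0 : W' != set0 by apply/set0Pn; exists y'.
  have [x' x'W' cx'] := nbr W' W'S W'c W'0.
  have x'S' : x' \in S' :\: W by move/subsetP: W'D; apply.
  have W0 : W != set0 by apply/set0Pn; exists y.
  have [x xW cx] := nbr W WS Wc W0.
  have yW' : y \notin W'.
    by apply/negP=> /(subsetP W'D); rewrite in_setD yW.
  have xS'W' : x \in S' :\: W'.
    rewrite in_setD (subsetP WS x xW) andbT; apply/negP=> /(subsetP W'D); rewrite in_setD xW.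
    by [].
  rewrite (lemA y W x' yS' cy yW Wc x'S' cx') (lemA y' W' x y'S' cy' y'W' W'c xS'W' cx).
  rewrite (sym y x') (W'mod y x' y' yS' yW' x'W' y'W') (sym y' y) -(Wmod y' x y y'S' y'W xW yW).
  by rewrite (sym x y').
have inS' : forall y, y \in S -> y != v -> y \in S' by move=> y yS yv; rewrite !inE yv yS.
have y1S' := inS' _ y1S y1v; have y2S' := inS' _ y2S y2v; have y3S' := inS' _ y3S y3v.
case: (eqVneq r1 red) => h1.
  have := main y2 y3 y2S' y3S'; rewrite c2 c3 -h1 eq_sym n12 eq_sym n13 => /(_ isT isT) E.
  by rewrite E eqxx in n23.
case: (eqVneq r2 red) => h2.
  have := main y1 y3 y1S' y3S'; rewrite c1 c3 -h2 n12 eq_sym n23 => /(_ isT isT) E.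
  by rewrite E eqxx in n13.
have := main y1 y2 y1S' y2S'; rewrite c1 c2 h1 h2 => /(_ isT isT) E.
by rewrite E eqxx in n12.
Qed.

Lemma gallai S : norb S -> (forall i, color_used col S i -> conn S i) -> ~ three S.
Proof. exact: (@gallai_core #|S| S (leqnn _)). Qed.

Lemma ncolors_mem S i :
  (i \in undup [seq col p.1 p.2 | p <- [seq p <- enum (setX S S) | p.1 != p.2]])
  <-> color_used col S i.
Proof.
rewrite mem_undup; split.
  case/mapP=> [[u v]]; rewrite mem_filter mem_enum inE /= => /andP[uv /andP[uS vS]] ->.
  by exists u, v.
case=> u [v [uS vS uv <-]]; apply/mapP; exists (u, v) => //.
by rewrite mem_filter mem_enum inE /= uv uS vS.
Qed.

Lemma ncolors2 S i j : color_used col S i -> color_used col S j -> i != j -> ~ three S ->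
  ncolors col S = 2.
Proof.
move=> ui uj ij nt; rewrite /ncolors.
set s := undup _.
have us : uniq s by apply: undup_uniq.
apply/eqP; rewrite eqn_leq; apply/andP; split; last first.
  have -> : 2 = size [:: i; j] by [].
  apply: uniq_leq_size; first by rewrite /= inE ij.
  move=> x; rewrite !inE => /orP[] /eqP ->; apply/ncolors_mem => //.
rewrite leqNgt; apply/negP => h3; apply: nt.
have m : forall k, k < size s -> color_used col S (nth 0 s k).
  by move=> k hk; apply/ncolors_mem; apply: mem_nth.
exists (nth 0 s 0), (nth 0 s 1), (nth 0 s 2); split; try apply: m; try lia.
by split; rewrite nth_uniq //; lia.
Qed.

End Gen2.


Section Mod.
Variable T : finType.
Variable c : T -> T -> nat.
Hypothesis c_sym : forall u v, c u v = c v u.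
Implicit Types (M N P A B U K D : {set T}) (x y z : T).

Lemma moduleP M : reflect (forall v u u', v \notin M -> u \in M -> u' \in M -> c u v = c u' v)
  (module c M).
Proof.
apply: (iffP forall_inP).
  move=> H v u u' vM uM u'M.
  have := H v; rewrite inE => /(_ vM) /forall_inP /(_ u uM) /forall_inP /(_ u' u'M).
  by move/eqP.
move=> H v; rewrite inE => vM; apply/forall_inP=> u uM; apply/forall_inP=> u' u'M.
by apply/eqP; apply: H.
Qed.

Lemma strongP M : reflect [/\ M != set0, module c M &
   forall M', module c M' -> [|| M \subset M', M' \subset M | [disjoint M & M']]]
  (strong_module c M).
Proof.
rewrite /strong_module; apply: (iffP idP).
  case/andP=> /andP[M0 mM] /forallP H; split => // M' mM'.
  by have /implyP := H M'; apply.
case=> M0 mM H; rewrite M0 mM /=; apply/forallP=> M'; apply/implyP; exact: H.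
Qed.

Lemma strong_ne0 M : strong_module c M -> M != set0.
Proof. by case/strongP. Qed.
Lemma strong_mod M : strong_module c M -> module c M.
Proof. by case/strongP. Qed.

Lemma PmaxP M P : reflect [/\ strong_module c P, P \proper M &
    forall N, strong_module c N -> N \proper M -> P \subset N -> N = P]
  (P \in Pmax c M).
Proof.
rewrite /Pmax inE; apply: (iffP idP).
  case/and3P=> sP pPM /forallP H; split => // N sN pN PN.
  by have /implyP := H N; rewrite sN pN PN => /(_ isT) /eqP.
case=> sP pPM H; rewrite sP pPM /=; apply/forallP=> N; apply/implyP=> /and3P[sN pN PN].
by rewrite (H N sN pN PN).
Qed.

Lemma module_set1 x : module c [set x].
Proof. by apply/moduleP=> v u u' _; rewrite !inE => /eqP -> /eqP ->. Qed.

Lemma strong_set1 x : strong_module c [set x].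
Proof.
apply/strongP; split.
- by apply/set0Pn; exists x; rewrite inE.
- exact: module_set1.
- move=> M' _; case: (boolP (x \in M')) => h.
    by rewrite sub1set h.
  by rewrite disjoints1 h !orbT.
Qed.

Lemma module_setT : module c [set: T].
Proof. by apply/moduleP=> v u u'; rewrite inE. Qed.

Lemma strong_setT : 0 < #|T| -> strong_module c [set: T].
Proof.
move=> T0; apply/strongP; split.
- by apply/set0Pn; case/card_gt0P: T0 => x _; exists x; rewrite inE.
- exact: module_setT.
- by move=> M' _; rewrite subsetT orbT.
Qed.

Lemma module_union A B : module c A -> module c B -> ~~ [disjoint A & B] -> module c (A :|: B).
Proof.
move=> /moduleP mA /moduleP mB; case/existsP=> y; rewrite !inE => /andP[yA yB].
apply/moduleP=> v u u'; rewrite !inE negb_or => /andP[vA vB].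
have H : forall w, (w \in A) || (w \in B) -> c w v = c y v.
  by move=> w /orP[] h; [apply: mA | apply: mB].
by move=> /H -> /H ->.
Qed.

Lemma pmax_sub M P : P \in Pmax c M -> P \subset M.
Proof. by case/PmaxP=> _ /properP[]. Qed.

Lemma pmax_disj M P P' : P \in Pmax c M -> P' \in Pmax c M -> P != P' -> [disjoint P & P'].
Proof.
case/PmaxP=> sP pP mP /PmaxP[sP' pP' mP'] PP'.
case/strongP: (sP) => _ _ /(_ P' (strong_mod sP')) /or3P[h|h|//].
  by rewrite (mP P' sP' pP' h) eqxx in PP'.
by rewrite (mP' P sP pP h) eqxx in PP'.
Qed.

Lemma pmax_cover M x : 1 < #|M| -> x \in M -> exists2 P, P \in Pmax c M & x \in P.
Proof.
move=> M1 xM.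
pose Q N := [&& strong_module c N, N \proper M & x \in N].
have Q1 : Q [set x].
  rewrite /Q strong_set1 inE eqxx andbT /=; rewrite properEcard sub1set xM cards1 //.
case: (arg_maxnP (fun N : {set T} => #|N|) Q1) => N /and3P[sN pN xN] Nmax.
exists N => //; apply/PmaxP; split => // N' sN' pN' NN'.
apply/eqP; rewrite eq_sym eqEcard NN' /=.
apply: Nmax; rewrite /Q sN' pN' /=; by move/subsetP: NN'; apply.
Qed.

Lemma pick_in A : A != set0 -> exists a, [pick x in A] = Some a /\ a \in A.
Proof.
case/set0Pn=> y yA; case: pickP => [a aA|H]; first by exists a.
by have := H y; rewrite yA.
Qed.

Lemma qcolE A B a b : [pick x in A] = Some a -> [pick x in B] = Some b -> qcol c A B = c a b.
Proof. by rewrite /qcol => -> ->. Qed.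

Lemma qcol_mod A B a b : module c A -> module c B -> [disjoint A & B] ->
  a \in A -> b \in B -> c a b = qcol c A B.
Proof.
move=> /moduleP mA /moduleP mB dAB aA bB.
have A0 : A != set0 by apply/set0Pn; exists a.
have B0 : B != set0 by apply/set0Pn; exists b.
have [a' [pa a'A]] := pick_in A0; have [b' [pb b'B]] := pick_in B0.
rewrite (qcolE pa pb).
have bA : b \notin A by rewrite (disjointFr (B:=A) _ bB) // disjoint_sym.
have a'B : a' \notin B by rewrite (disjointFr dAB a'A).
rewrite (mA b a a' bA aA a'A) c_sym (mB a' b b' a'B bB b'B) c_sym //.
Qed.

Lemma qcol_sym A B : qcol c A B = qcol c B A.
Proof. by rewrite /qcol; case: [pick x in A] => [a|]; case: [pick x in B] => [b|] //. Qed.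

Lemma qverts_facts M : strong_module c M ->
  [/\ forall A, A \in qverts c M -> strong_module c A /\ A \subset M,
      forall A B, A \in qverts c M -> B \in qverts c M -> A != B -> [disjoint A & B] &
      forall x, x \in M -> exists2 A, A \in qverts c M & x \in A].
Proof.
move=> sM; rewrite /qverts; case: eqP => M1.
  split.
  - by move=> A; rewrite inE => /eqP ->.
  - by move=> A B; rewrite !inE => /eqP -> /eqP ->; rewrite eqxx.
  - by move=> x xM; exists M; rewrite ?inE.
split.
- by move=> A /PmaxP[sA /properP[]].
- exact: pmax_disj.
- move=> x xM; apply: pmax_cover => //.
  have : 0 < #|M| by apply/card_gt0P; exists x.
  by case: #|M| M1 => [|[|n]].
Qed.

Lemma qverts_gt0 M : strong_module c M -> 0 < #|qverts c M|.
Proof.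
move=> sM; have [_ _ cov] := qverts_facts sM.
case/set0Pn: (strong_ne0 sM) => x /cov [A AQ _]; apply/card_gt0P; by exists A.
Qed.

End Mod.


Section K.
Variable T : finType.
Variable c : T -> T -> nat.
Hypothesis c_sym : forall u v, c u v = c v u.
Implicit Types (M N P A B U K D : {set T}) (x y z : T).

Definition dclb M d K := [forall a in K, forall b in M, (b \notin K) ==> (c a b == d)].
Definition dcl M d K := forall a b, a \in K -> b \in M -> b \notin K -> c a b = d.

Lemma dclP M d K : reflect (dcl M d K) (dclb M d K).
Proof.
apply: (iffP idP).
  move=> /forall_inP H a b aK bM bK.
  by have /forall_inP /(_ b bM) /implyP /(_ bK) /eqP := H a aK.
move=> H; apply/forall_inP=> a aK; apply/forall_inP=> b bM; apply/implyP=> bK.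
by apply/eqP; apply: H.
Qed.

Lemma not_disj A B : ~~ [disjoint A & B] -> exists2 x, x \in A & x \in B.
Proof. by case/existsP=> y; rewrite !inE => /andP[]; exists y. Qed.

Lemma klemma M P d K : strong_module c M -> P \in Pmax c M -> K \subset M -> P \subset K ->
  K != M -> dcl M d K -> dcl M d P.
Proof.
move=> sM PQ KM PK KnM Kc.
case/PmaxP: (PQ) => sP pPM maxP.
pose Pr (K' : {set T}) := [&& K' \subset M, P \subset K' & dclb M d K'].
have PrK : Pr K by rewrite /Pr KM PK; apply/dclP.
case: (arg_minnP (fun K' : {set T} => #|K'|) PrK) => Km /and3P[KmM PKm /dclP Kmc] Kmin.
have KmK : Km \subset K.
  have PrI : Pr (Km :&: K).
    rewrite /Pr (subset_trans (subsetIl _ _) KmM) subsetI PKm PK /=.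
    apply/dclP=> a b; rewrite !inE => /andP[aKm aK] bM; rewrite negb_and => /orP[] h.
      exact: Kmc.
    exact: Kc.
  have le := Kmin _ PrI.
  by apply/setIidPl; apply/eqP; rewrite eqEcard subsetIl le.
have KmnM : Km != M.
  apply/eqP=> E; subst Km; move/negP: KnM; apply; rewrite eqEsubset KM KmK //.
have mM := strong_mod sM.
have mKm : module c Km.
  apply/moduleP=> v u u' vKm uKm u'Km.
  case: (boolP (v \in M)) => vM.
    by rewrite (Kmc u v uKm vM vKm) (Kmc u' v u'Km vM vKm).
  by move/moduleP: mM; apply => //; [move/subsetP: KmM; apply | move/subsetP: KmM; apply].
have P0 := strong_ne0 sP.
have sKm : strong_module c Km.
  apply/strongP; split => //.
    case/set0Pn: P0 => p pP; apply/set0Pn; exists p; by move/subsetP: PKm; apply.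
  move=> M'' mM''.
  case: (boolP (Km \subset M'')) => // h1; case: (boolP (M'' \subset Km)) => // h2 /=.
  case: (boolP [disjoint Km & M'']) => // ndisj; exfalso.
  have M''M : M'' \subset M.
    case/strongP: (sM) => _ _ /(_ M'' mM'') /or3P[h|h|h] //; exfalso.
      by move/negP: h1; apply; apply: subset_trans h.
    by move/negP: ndisj; apply; apply: disjointWl h.
  have PM'' : (P \subset M'') || [disjoint P & M''].
    case/strongP: (sP) => _ _ /(_ M'' mM'') /or3P[->|h|->] //; last by rewrite orbT.
    by exfalso; move/negP: h2; apply; apply: subset_trans PKm.
  have [u [w [uI wD cuw]]] : exists u w, [/\ u \in Km :&: M'', w \in Km :\: M'' & c u w != d].
    apply: NNPP => H.
    have H' : forall u w, u \in Km :&: M'' -> w \in Km :\: M'' -> c u w = d.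
      move=> u w uI wD; apply: NNPP => hn; apply: H; exists u, w; split => //.
      by apply/eqP.
    pose K1 := if P \subset M'' then Km :&: M'' else Km :\: M''.
    have PrK1 : Pr K1.
      rewrite /Pr /K1; case: ifP => hP.
      + rewrite (subset_trans (subsetIl _ _) KmM) subsetI PKm hP /=.
        apply/dclP=> a b aI bM bI; case: (boolP (b \in Km)) => bKm.
          by apply: H' => //; rewrite !inE bKm andbT; move: bI; rewrite !inE bKm.
        by apply: Kmc => //; move: aI; rewrite inE => /andP[].
      + have dP : [disjoint P & M''] by move: PM''; rewrite hP.
        rewrite (subset_trans (subsetDl _ _) KmM) subsetD PKm dP /=.
        apply/dclP=> a b aD bM bD; case: (boolP (b \in Km)) => bKm.
          rewrite c_sym; apply: H' => //.
          by move: bD; rewrite !inE bKm /= ?andbT ?negbK.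
        by apply: Kmc => //; move: aD; rewrite inE => /andP[].
    have := Kmin _ PrK1; apply/negP; rewrite -ltnNge; apply: proper_card.
    rewrite /K1; case: ifP => _.
      rewrite properEneq subsetIl andbT; apply/eqP=> E.
      by move/negP: h1; apply; rewrite -E subsetIr.
    rewrite properEneq subsetDl andbT; apply/eqP=> E.
    case/not_disj: ndisj => x xKm xM''.
    by move/setP: E => /(_ x); rewrite !inE xKm xM''.
  case/subsetPn: h2 => z zM'' zKm.
  have zM : z \in M by move/subsetP: M''M; apply.
  move: uI wD; rewrite !inE => /andP[uKm uM''] /andP[wM'' wKm].
  have := Kmc w z wKm zM zKm.
  move/moduleP: mM'' => /(_ w u z wM'' uM'' zM'') cu.
  by rewrite c_sym -cu => E; rewrite E eqxx in cuw.
have pKm : Km \proper M by rewrite properEneq KmnM KmM.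
by rewrite -(maxP Km sKm pKm PKm).
Qed.

Lemma prime_noW M (W : {set {set T}}) A0 B0 P0 : strong_module c M -> ~~ series_module c M -> #|M| != 1 ->
  W \subset Pmax c M -> A0 \in W -> B0 \in W -> A0 != B0 -> P0 \in Pmax c M -> P0 \notin W ->
  modS (qcol c) (Pmax c M) W -> False.
Proof.
move=> sM nser M1 WQ A0W B0W AB P0Q P0W Wmod.
have mM := strong_mod sM.
have inQ : forall A, A \in W -> A \in Pmax c M by move=> A; move/subsetP: WQ; apply.
have A0Q := inQ _ A0W; have B0Q := inQ _ B0W.
have partM : forall A, A \in Pmax c M -> A \subset M by move=> A /pmax_sub.
have partS : forall A, A \in Pmax c M -> strong_module c A by move=> A /PmaxP[].
have M1' : 1 < #|M|.
  have : 0 < #|M| by apply/card_gt0P; case/set0Pn: (strong_ne0 sM) => x xM; exists x.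
  by case: #|M| M1 => [|[|n]].
have cov : forall x, x \in M -> exists2 A, A \in Pmax c M & x \in A.
  by move=> x xM; apply: pmax_cover.
have disjQ := @pmax_disj _ c M.
pose U0 := \bigcup_(A in W) A.
have U0M : U0 \subset M.
  by apply/bigcupsP=> A AW; apply: partM; apply: inQ.
have mU0 : module c U0.
  apply/moduleP=> v u u' vU uU u'U.
  case/bigcupP: uU => Au AuW uAu; case/bigcupP: u'U => Au' Au'W u'Au'.
  case: (boolP (v \in M)) => vM; last first.
    by move/moduleP: mM; apply => //; apply: (subsetP U0M); apply/bigcupP;
      [exists Au | exists Au'].
  have [Pv PvQ vPv] := cov v vM.
  have PvW : Pv \notin W.
    by apply/negP=> PvW; move/negP: vU; apply; apply/bigcupP; exists Pv.
  have nAuPv : Au != Pv by apply/eqP=> E; subst; rewrite AuW in PvW.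
  have nAu'Pv : Au' != Pv by apply/eqP=> E; subst; rewrite Au'W in PvW.
  rewrite (qcol_mod c_sym (strong_mod (partS _ (inQ _ AuW))) (strong_mod (partS _ PvQ))
     (disjQ _ _ (inQ _ AuW) PvQ nAuPv) uAu vPv).
  rewrite (qcol_mod c_sym (strong_mod (partS _ (inQ _ Au'W))) (strong_mod (partS _ PvQ))
     (disjQ _ _ (inQ _ Au'W) PvQ nAu'Pv) u'Au' vPv).
  exact: Wmod.
have A0U0 : A0 \subset U0 by apply: bigcup_sup.
have B0U0 : B0 \subset U0 by apply: bigcup_sup.
have pU0 : U0 \proper M.
  rewrite properEneq U0M andbT; apply/eqP=> E.
  case/set0Pn: (strong_ne0 (partS _ P0Q)) => p pP0.
  have : p \in U0 by rewrite E; move/subsetP: (partM _ P0Q); apply.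
  case/bigcupP=> A AW pA.
  have nAP0 : A != P0 by apply/eqP=> E'; subst; rewrite AW in P0W.
  by rewrite (disjointFr (disjQ _ _ (inQ _ AW) P0Q nAP0) pA) in pP0.
pose cand U := [&& module c U, U \proper M, A0 \subset U & B0 \subset U].
have cU0 : cand U0 by rewrite /cand mU0 pU0 A0U0 B0U0.
case: (arg_maxnP (fun U : {set T} => #|U|) cU0) => U /and4P[mU pU A0U B0U] Umax.
have UM : U \subset M by case/properP: pU.
have A00 := strong_ne0 (partS _ A0Q); have B00 := strong_ne0 (partS _ B0Q).
have dA0B0 := disjQ _ _ A0Q B0Q AB.
have nsU : ~~ strong_module c U.
  apply/negP=> sU.
  case/PmaxP: (A0Q) => _ _ /(_ U sU pU A0U) E; subst U.
  case/set0Pn: B00 => b bB0.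
  have dBA : [disjoint B0 & A0] by rewrite disjoint_sym.
  by move: (subsetP B0U b bB0); rewrite (disjointFr dBA bB0).
have U0' : U != set0.
  case/set0Pn: A00 => a aA0; apply/set0Pn; exists a; by move/subsetP: A0U; apply.
have [M' [mM' h1 h2 h3]] : exists M', [/\ module c M', ~~ (U \subset M'),
    ~~ (M' \subset U) & ~~ [disjoint U & M']].
  apply: NNPP => hne; move/negP: nsU; apply; apply/strongP; split => // M'' mM''.
  case: (boolP [|| U \subset M'', M'' \subset U | [disjoint U & M'']]) => // h; exfalso.
  by apply: hne; exists M''; move: h; rewrite !negb_or => /and3P[].
have M'M : M' \subset M.
  case/strongP: (sM) => _ _ /(_ M' mM') /or3P[h|h|h] //; exfalso.
    by move/negP: h1; apply; apply: subset_trans h.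
  by move/negP: h3; apply; apply: disjointWl h.
have UM'eq : U :|: M' = M.
  case: (eqVneq (U :|: M') M) => // ne; exfalso.
  have cUM : cand (U :|: M').
    rewrite /cand module_union // properEneq ne subUset UM M'M /=.
    by rewrite (subset_trans A0U (subsetUl _ _)) (subset_trans B0U (subsetUl _ _)).
  have le : #|U :|: M'| <= #|U| := Umax _ cUM.
  have E : U :|: M' = U.
    by apply/eqP; rewrite eq_sym eqEcard subsetUl le.
  by move/negP: h2; apply; rewrite -E subsetUr.
case/subsetPn: (h1) => x0 x0U x0M'.
case/subsetPn: (h2) => z0 z0M' z0U.
set d := c x0 z0.
have f1 : forall x z, x \in U -> x \notin M' -> z \in M' -> z \notin U -> c x z = d.
  move=> x z xU xM' zM' zU.
  move/moduleP: mU => /(_ z x x0 zU xU x0U) ->.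
  by rewrite c_sym (moduleP _ _ mM' x0 z z0 x0M' zM' z0M') c_sym.
have f2 : forall x y, x \in U -> x \notin M' -> y \in U -> y \in M' -> c x y = d.
  move=> x y xU xM' yU yM'.
  rewrite c_sym (moduleP _ _ mM' x y z0 xM' yM' z0M') c_sym; exact: f1.
have f3 : forall y z, y \in U -> y \in M' -> z \in M' -> z \notin U -> c y z = d.
  move=> y z yU yM' zM' zU.
  rewrite (moduleP _ _ mU z y x0 zU yU x0U); exact: f1.
have partU : forall P, P \in Pmax c M -> (P \subset U) || [disjoint P & U].
  move=> P PQ; case/strongP: (partS _ PQ) => _ _ /(_ U mU) /or3P[->|h|->] //; last by rewrite orbT.
  exfalso; have A0P : A0 \subset P := subset_trans A0U h.
  case: (eqVneq A0 P) => [E|ne].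
    subst P; case/set0Pn: B00 => b bB0.
    have dBA : [disjoint B0 & A0] by rewrite disjoint_sym.
    by move: (subsetP (subset_trans B0U h) b bB0); rewrite (disjointFr dBA bB0).
  have := disjQ _ _ A0Q PQ ne; case/set0Pn: A00 => a aA0.
  by move/disjointFr => /(_ a aA0); rewrite (subsetP A0P a aA0).
have partM' : forall P, P \in Pmax c M -> (P \subset M') || [disjoint P & M'].
  move=> P PQ; case/strongP: (partS _ PQ) => _ _ /(_ M' mM') /or3P[->|h|->] //; last by rewrite orbT.
  exfalso; case/orP: (partU P PQ) => h'.
    by move/negP: (h2); apply; apply: subset_trans h'.
  by move/negP: h3; rewrite disjoint_sym; apply; apply: disjointWl h'.
have allP : forall P, P \in Pmax c M -> dcl M d P.
  move=> P PQ.
  have PM := partM _ PQ.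
  have nM : forall K, z0 \notin K -> K != M.
    by move=> K zK; apply/eqP=> E; subst K; rewrite (subsetP M'M z0 z0M') in zK.
  have nM2 : forall K, x0 \notin K -> K != M.
    by move=> K zK; apply/eqP=> E; subst K; rewrite (subsetP UM x0 x0U) in zK.
  have inUM : forall b, b \in M -> (b \in U) || (b \in M').
    by move=> b; rewrite -UM'eq inE.
  case/orP: (partU P PQ) => hU; case/orP: (partM' P PQ) => hM'.
  - apply: (@klemma M P d (U :&: M')) => //.
    + exact: subset_trans (subsetIl _ _) UM.
    + by rewrite subsetI hU hM'.
    + by apply: nM2; rewrite inE (negbTE x0M') andbF.
    + move=> a b aK bM; move: aK; rewrite !inE => /andP[aU aM'].
      case: (boolP (b \in U)) => bU; case: (boolP (b \in M')) => bM' //= _.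
      * by rewrite c_sym; apply: f2.
      * by apply: f3.
      * by move: (inUM b bM); rewrite (negbTE bU) (negbTE bM').
  - apply: (@klemma M P d (U :\: M')) => //.
    + exact: subset_trans (subsetDl _ _) UM.
    + by rewrite subsetD hU hM'.
    + by apply: nM; rewrite inE z0M'.
    + move=> a b aK bM; move: aK; rewrite !inE => /andP[aM' aU].
      case: (boolP (b \in U)) => bU; case: (boolP (b \in M')) => bM' //= _.
      * by apply: f2.
      * by apply: f1.
      * by move: (inUM b bM); rewrite (negbTE bU) (negbTE bM').
  - apply: (@klemma M P d (M' :\: U)) => //.
    + exact: subset_trans (subsetDl _ _) M'M.
    + by rewrite subsetD hM' hU.
    + by apply: nM2; rewrite inE x0U.
    + move=> a b aK bM; move: aK; rewrite !inE => /andP[aU aM'].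
      case: (boolP (b \in U)) => bU; case: (boolP (b \in M')) => bM' //= _.
      * by rewrite c_sym; apply: f3.
      * by rewrite c_sym; apply: f1.
      * by move: (inUM b bM); rewrite (negbTE bU) (negbTE bM').
  - exfalso; case/set0Pn: (strong_ne0 (partS _ PQ)) => p pP.
    have pM := subsetP PM p pP.
    case/orP: (inUM p pM) => h.
      by rewrite (disjointFr hU pP) in h.
    by rewrite (disjointFr hM' pP) in h.
have qd : forall A B, A \in Pmax c M -> B \in Pmax c M -> A != B -> qcol c A B = d.
  move=> A B AQ BQ nAB.
  have [a [pa aA]] := pick_in (strong_ne0 (partS _ AQ)).
  have [b [pb bB]] := pick_in (strong_ne0 (partS _ BQ)).
  rewrite (qcolE c pa pb); apply: (allP A AQ) => //.
    exact: (subsetP (partM _ BQ)).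
  by rewrite (disjointFr (A:=B) (B:=A) _ bB) // disjoint_sym; apply: disjQ.
move/negP: nser; apply.
rewrite /series_module sM /qverts (negbTE M1) /=.
apply/andP; split.
  by apply/card_gt1P; exists A0, B0.
apply/forall_inP=> A AQ; apply/forall_inP=> B BQ; apply/forall_inP=> A' A'Q.
apply/forall_inP=> B' B'Q; apply/implyP=> nAB; apply/implyP=> nA'B'.
by rewrite (qd A B AQ BQ nAB) (qd A' B' A'Q B'Q nA'B').
Qed.

End K.


Lemma good_sub (X : finType) (col : X -> X -> nat) (S S' : {set X}) f :
  S' \subset S -> good col S f -> good col S' f.
Proof.
move=> /subsetP sub [inj H]; split.
  by move=> x y xS yS; apply: inj; apply: sub.
by move=> u v w uS vS wS; apply: H; apply: sub.
Qed.

Lemma arith (N p q a b : nat) : a < N -> b < N -> p * N + a < q * N + b ->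
  p < q \/ (p = q /\ a < b).
Proof.
move=> aN bN h; case: (ltngtP p q) => pq; [by left| |by right; split => //; lia].
exfalso; have : q * N + b < p * N by nia.
lia.
Qed.

Lemma arith_eq (N p q a b : nat) : a < N -> b < N -> p * N + a = q * N + b ->
  p = q /\ a = b.
Proof.
move=> aN bN h; case: (ltngtP p q) => pq; last by subst; lia.
  exfalso; have : p * N + a < q * N by nia.
  lia.
exfalso; have : q * N + b < p * N by nia.
lia.
Qed.

Section Main.
Variable T : finType.
Variable c : T -> T -> nat.
Hypothesis c_sym : forall u v, c u v = c v u.
Implicit Types (M N P A B U K D : {set T}) (x y z : T).

Definition gq (f : T -> nat) (A : {set T}) : nat :=
  match [pick x in A] with Some a => f a | None => 0 end.

Lemma gqE f A a : [pick x in A] = Some a -> gq f A = f a.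
Proof. by rewrite /gq => ->. Qed.

Lemma good_q f M : good c [set: T] f -> strong_module c M ->
  good (qcol c) (qverts c M) (gq f).
Proof.
move=> [inj H] sM; have [qS qD _] := qverts_facts sM.
have rep : forall A, A \in qverts c M -> exists a, [pick x in A] = Some a /\ a \in A.
  move=> A AQ; have [sA _] := qS A AQ; exact: (pick_in (strong_ne0 sA)).
split.
  have inj' : forall x y, f x = f y -> x = y by move=> x y; apply: inj; rewrite inE.
  move=> A B AQ BQ; have [a [pa aA]] := rep A AQ; have [b [pb bB]] := rep B BQ.
  rewrite (gqE f pa) (gqE f pb) => /inj' E; subst b.
  apply/eqP; apply: contraT => nAB.
  by rewrite (disjointFr (qD A B AQ BQ nAB) aA) in bB.
move=> A B C AQ BQ CQ; have [a [pa aA]] := rep A AQ; have [b [pb bB]] := rep B BQ.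
have [cc [pc cC]] := rep C CQ.
rewrite (gqE f pa) (gqE f pb) (gqE f pc) (qcolE c pa pc) (qcolE c pa pb) (qcolE c pb pc).
by apply: H; rewrite inE.
Qed.

Lemma norb_q M : norb c [set: T] -> strong_module c M -> norb (qcol c) (qverts c M).
Proof.
move=> nr sM; have [qS qD _] := qverts_facts sM.
have rep : forall A, A \in qverts c M -> exists a, [pick x in A] = Some a /\ a \in A.
  move=> A AQ; have [sA _] := qS A AQ; exact: (pick_in (strong_ne0 sA)).
move=> A B C AQ BQ CQ nAB nBC nAC.
have [a [pa aA]] := rep A AQ; have [b [pb bB]] := rep B BQ.
have [cc [pc cC]] := rep C CQ.
rewrite (qcolE c pa pc) (qcolE c pa pb) (qcolE c pb pc).
have dist : forall X Y x y, X \in qverts c M -> Y \in qverts c M -> X != Y ->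
    x \in X -> y \in Y -> x != y.
  move=> X Y x y XQ YQ nXY xX yY; apply/eqP=> E; subst y.
  by rewrite (disjointFr (qD X Y XQ YQ nXY) xX) in yY.
apply: nr; rewrite ?inE //; [exact: (dist A B a b AQ BQ nAB aA bB) | exact: (dist B C b cc BQ CQ nBC bB cC) | exact: (dist A C a cc AQ CQ nAC aA cC)].
Qed.

Lemma norb_of_nr : ~ rainbow_triangle c -> norb c [set: T].
Proof.
move=> nr u v w _ _ _ uv vw uw.
case: (eqVneq (c u v) (c v w)) => h1; first by left.
case: (eqVneq (c v w) (c u w)) => h2; first by right; left.
case: (eqVneq (c u v) (c u w)) => h3; first by right; right.
by exfalso; apply: nr; exists u, v, w; split.
Qed.

Lemma good_nr f : good c [set: T] f -> ~ rainbow_triangle c.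
Proof.
case=> inj H [u [v [w [uv vw uw [h1 h2 h3]]]]].
have G : forall x y z, f x < f y -> f y < f z -> c x z = c x y \/ c x z = c y z.
  by move=> x y z; apply: H; rewrite inE.
have inj' : forall x y, f x = f y -> x = y by move=> x y; apply: inj; rewrite inE.
have fuv : f u != f v by apply: contra uv => /eqP/inj' ->.
have fvw : f v != f w by apply: contra vw => /eqP/inj' ->.
have fuw : f u != f w by apply: contra uw => /eqP/inj' ->.
move: h1 h2 h3.
case: (ltngtP (f u) (f v)) => a; case: (ltngtP (f v) (f w)) => b; case: (ltngtP (f u) (f w)) => d;
 try lia.
all: try (have := G u v w ltac:(lia) ltac:(lia)); try (have := G u w v ltac:(lia) ltac:(lia));
 try (have := G v u w ltac:(lia) ltac:(lia)); try (have := G v w u ltac:(lia) ltac:(lia));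
 try (have := G w u v ltac:(lia) ltac:(lia)); try (have := G w v u ltac:(lia) ltac:(lia));
 rewrite ?(c_sym v u) ?(c_sym w v) ?(c_sym w u); lia.
Qed.

Lemma prime_no3 M : norb c [set: T] -> prime_module c M -> 3 <= #|qverts c M| ->
  ~ three (qcol c) (qverts c M).
Proof.
move=> nr /andP[sM nser] h3.
have M1 : #|M| != 1 by apply/eqP=> E; move: h3; rewrite /qverts E eqxx cards1.
have QE : qverts c M = Pmax c M by rewrite /qverts (negbTE M1).
have nrQ := norb_q nr sM.
rewrite QE in nrQ *.
apply: (gallai (@qcol_sym _ c c_sym) nrQ) => i ui D DQ Dc.
case: (eqVneq D set0) => [->|D0]; first by left.
case: (eqVneq D (Pmax c M)) => [->|DQ']; first by right.
exfalso.
case: ui => A [B [AQ BQ nAB cAB]].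
have [W [WQ AW Wc Wmin Wmod]] := comp_ex i nrQ AQ.
have BW : B \in W.
  apply: contraT => BW; move/closedP: Wc => /(_ A B AW BQ BW).
  by rewrite cAB eqxx.
have [P0 P0Q P0W] : exists2 P0, P0 \in Pmax c M & P0 \notin W.
  case: (boolP (A \in D)) => AD.
    have WD := Wmin D DQ Dc AD.
    have : D \proper Pmax c M by rewrite properEneq DQ' DQ.
    case/properP=> _ [P0 P0Q P0D]; exists P0 => //.
    by apply: contra P0D; move/subsetP: WD; apply.
  have AD' : A \in Pmax c M :\: D by rewrite in_setD AD AQ.
  have WD := Wmin _ (subsetDl _ _) (closedC (@qcol_sym _ c c_sym) Dc) AD'.
  case/set0Pn: D0 => P0 P0D; exists P0; first by move/subsetP: DQ; apply.
  apply/negP=> /(subsetP WD); by rewrite in_setD P0D.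
rewrite -QE in Wmod WQ.
by apply: (prime_noW c_sym sM nser M1 _ AW BW nAB P0Q P0W); rewrite -?QE.
Qed.

Definition er (A : {set T}) : nat := enum_rank A.

Lemma er_inj : injective er.
Proof. by move=> A B /val_inj /enum_rank_inj. Qed.

Lemma iv_iii : (forall M, prime_module c M ->
                ecpg (qcol c) (qverts c M) /\
                (3 <= #|qverts c M| -> ncolors (qcol c) (qverts c M) = 2)) ->
  forall M, strong_module c M -> ecpg (qcol c) (qverts c M).
Proof.
move=> iv M sM.
case: (boolP (series_module c M)) => ser; last first.
  by case: (iv M) => //; rewrite /prime_module sM ser.
apply: (good_ecpg (@qcol_sym _ c c_sym) (qverts_gt0 sM) (f := er)).
split; first by move=> A B _ _; apply: er_inj.
move=> A B C AQ BQ CQ h1 h2; left.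
move: ser => /andP[_ /forall_inP /(_ A AQ) /forall_inP /(_ C CQ) /forall_inP /(_ A AQ)].
move=> /forall_inP /(_ B BQ) /implyP H.
have nAC : A != C by apply/eqP=> E; subst; lia.
have nAB : A != B by apply/eqP=> E; subst; lia.
by move/implyP: (H nAC) => /(_ nAB) /eqP.
Qed.

Lemma compose : (forall M, strong_module c M -> ecpg (qcol c) (qverts c M)) ->
  forall n M, #|M| <= n -> strong_module c M -> exists f, good c M f.
Proof.
move=> iii; elim=> [|n IH] M Mn sM.
  move: Mn; rewrite leqn0 => /eqP/cards0_eq E.
  by move: (strong_ne0 sM); rewrite E eqxx.
case: (eqVneq #|M| 1) => M1.
  exists (fun _ => 0); split.
    have /cards1P [x Mx] : #|M| == 1 by apply/eqP.
    by rewrite Mx => u v; rewrite !inE => /eqP -> /eqP ->.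
  by move=> u v w _ _ _; rewrite ltnn.
have QE : qverts c M = Pmax c M by rewrite /qverts (negbTE M1).
have M1' : 1 < #|M|.
  have : 0 < #|M| by apply/card_gt0P; case/set0Pn: (strong_ne0 sM) => x xM; exists x.
  by case: #|M| M1 => [|[|k]].
have partS : forall P, P \in Pmax c M -> strong_module c P by move=> P /PmaxP[].
have HP : forall P, exists f, P \in Pmax c M -> good c P f.
  move=> P; case: (boolP (P \in Pmax c M)) => PQ; last by exists (fun _ => 0).
  have [f gf] : exists f, good c P f.
    apply: IH (partS _ PQ).
    case/PmaxP: PQ => _ /proper_card h _; lia.
  by exists f.
pose F P := rk P (proj1_sig (constructive_indefinite_description _ (HP P))).
have gF : forall P, P \in Pmax c M -> good c P (F P).
  move=> P PQ; apply: good_rk.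
  exact: (proj2_sig (constructive_indefinite_description _ (HP P)) PQ).
have FN : forall P x, x \in P -> F P x < #|T|.
  move=> P x xP; apply: leq_trans (rk_bound _ xP) _; exact: max_card.
have [g gg] : exists g, good (qcol c) (Pmax c M) g.
  by rewrite -QE; apply: (ecpg_good (@qcol_sym _ c c_sym)); exact: iii.
pose part x := odflt set0 [pick P in Pmax c M | x \in P].
have partP : forall x, x \in M -> part x \in Pmax c M /\ x \in part x.
  move=> x xM; rewrite /part; case: pickP => [P /andP[PQ xP]|H] //=.
  have [P PQ xP] := pmax_cover c M1' xM.
  by have := H P; rewrite PQ xP.
have disjQ := @pmax_disj _ c M.
pose h x := g (part x) * #|T| + F (part x) x.
exists h; split.
  move=> x y xM yM; rewrite /h => E.
  have [pxQ xpx] := partP x xM; have [pyQ ypy] := partP y yM.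
  have [E1 E2] := arith_eq (FN _ _ xpx) (FN _ _ ypy) E.
  have Epart : part x = part y by apply: gg.1.
  rewrite -Epart in E2 ypy; apply: (gF _ pxQ).1 => //.
move=> x y z xM yM zM; rewrite /h => hxy hyz.
have [pxQ xpx] := partP x xM; have [pyQ ypy] := partP y yM; have [pzQ zpz] := partP z zM.
have Rxy := arith (FN _ _ xpx) (FN _ _ ypy) hxy.
have Ryz := arith (FN _ _ ypy) (FN _ _ zpz) hyz.
have ginj : forall P P', P \in Pmax c M -> P' \in Pmax c M -> g P = g P' -> P = P'.
  by move=> P P' PQ P'Q; apply: gg.1.
have modP : forall P, P \in Pmax c M -> module c P by move=> P /partS /strong_mod.
have cq : forall P P' a b, P \in Pmax c M -> P' \in Pmax c M -> P != P' -> a \in P -> b \in P' ->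
    c a b = qcol c P P'.
  move=> P P' a b PQ P'Q nPP' aP bP'.
  by apply: (qcol_mod c_sym (modP _ PQ) (modP _ P'Q) (disjQ _ _ PQ P'Q nPP')).
have notin : forall P P' a, P \in Pmax c M -> P' \in Pmax c M -> P != P' -> a \in P' -> a \notin P.
  move=> P P' a PQ P'Q nPP' aP'; apply/negP=> aP.
  by rewrite (disjointFr (disjQ _ _ PQ P'Q nPP') aP) in aP'.
case: (eqVneq (part x) (part y)) => exy; case: (eqVneq (part y) (part z)) => eyz.
- rewrite -eyz in Ryz zpz; rewrite -exy in Ryz Rxy ypy zpz.
  case: Rxy => [|[_ Rxy]]; first by lia.
  case: Ryz => [|[_ Ryz]]; first by lia.
  by apply: (gF _ pxQ).2.
- right; rewrite -exy in ypy.
  have zx : z \notin part x by apply: (notin _ _ _ pxQ pzQ _ zpz); rewrite exy.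
  by move/moduleP: (modP _ pxQ) => /(_ z x y zx xpx ypy).
- left; rewrite -eyz in zpz.
  have xy : x \notin part y by apply: (notin _ _ _ pyQ pxQ _ xpx); rewrite eq_sym.
  by move/moduleP: (modP _ pyQ) => /(_ x z y xy zpz ypy); rewrite c_sym (c_sym y x).
- have lxy : g (part x) < g (part y).
    case: Rxy => [//|[E _]]; by rewrite (ginj _ _ pxQ pyQ E) eqxx in exy.
  have lyz : g (part y) < g (part z).
    case: Ryz => [//|[E _]]; by rewrite (ginj _ _ pyQ pzQ E) eqxx in eyz.
  have exz : part x != part z.
    by apply/eqP=> E; rewrite E in lxy; lia.
  rewrite (cq _ _ _ _ pxQ pzQ exz xpx zpz) (cq _ _ _ _ pxQ pyQ exy xpx ypy).
  rewrite (cq _ _ _ _ pyQ pzQ eyz ypy zpz).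
  by apply: gg.2.
Qed.

End Main.


Section V.
Variable T : finType.
Variable c : T -> T -> nat.
Hypothesis c_sym : forall u v, c u v = c v u.

Lemma v_iv : (forall i, color_used c [set: T] i -> simple_perm_graph [set: T] (mono c i)) ->
  ~ rainbow_triangle c -> forall M, prime_module c M ->
  ecpg (qcol c) (qverts c M) /\ (3 <= #|qverts c M| -> ncolors (qcol c) (qverts c M) = 2).
Proof.
move=> sp nrb M pM.
have nr := norb_of_nr nrb.
have sM : strong_module c M by case/andP: pM.
have [qS qD _] := qverts_facts sM.
set Q := qverts c M.
have rep : forall A, A \in Q -> exists a, [pick x in A] = Some a /\ a \in A.
  by move=> A AQ; have [sA _] := qS A AQ; exact: (pick_in (strong_ne0 sA)).
have dist : forall X Y x y, X \in Q -> Y \in Q -> X != Y -> x \in X -> y \in Y -> x != y.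
  move=> X Y x y XQ YQ nXY xX yY; apply/eqP=> E; subst y.
  by rewrite (disjointFr (qD X Y XQ YQ nXY) xX) in yY.
have Q0 : 0 < #|Q| := qverts_gt0 sM.
case: (leqP 3 #|Q|) => h3; last first.
  split; last by lia.
  apply: (good_ecpg (@qcol_sym _ c c_sym) Q0 (f := @er T)); split.
    by move=> A B _ _; apply: er_inj.
  move=> A B C AQ BQ CQ h1 h2; exfalso.
  have : 2 < #|Q|.
    apply/card_gt2P; exists A, B, C; split; first by split.
    by split; apply/eqP=> E; subst; lia.
  lia.
have n3 := prime_no3 c_sym nr pM h3.
have h2 : 2 <= #|Q| by lia.
move: (pM); rewrite /prime_module /series_module sM -/Q h2 /=.
case/forall_inPn=> A AQ /forall_inPn [B BQ /forall_inPn [A' A'Q /forall_inPn [B' B'Q]]].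
rewrite !negb_imply => /andP[nAB /andP[nA'B' ne]].
have uQ : forall X Y, X \in Q -> Y \in Q -> X != Y -> color_used (qcol c) Q (qcol c X Y).
  by move=> X Y XQ YQ nXY; exists X, Y.
split; last first.
  move=> _; apply: (ncolors2 (uQ _ _ AQ BQ nAB) (uQ _ _ A'Q B'Q nA'B') ne n3).
have no3 : forall p q r, color_used (qcol c) Q p -> color_used (qcol c) Q q ->
    color_used (qcol c) Q r -> p != q -> q != r -> p != r -> False.
  by move=> p q r up uq ur pq qr pr; apply: n3; exists p, q, r.
set i := qcol c A B.
have [a [pa aA]] := rep A AQ; have [b [pb bB]] := rep B BQ.
have ui : color_used c [set: T] i.
  by exists a, b; rewrite !inE; split => //; [exact: dist AQ BQ nAB aA bB | rewrite /i (qcolE c pa pb)].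
have [l [Hl [pi Hpi]]] := sp i ui.
have TC := perm_TC Hpi.
have linj : forall x y, l x = l y -> x = y by move=> x y; apply: Hl; rewrite inE.
pose g := gq (fun x => nat_of_ord (l x)).
apply: (good_ecpg (@qcol_sym _ c c_sym) Q0 (f := g)); split.
  move=> X Y XQ YQ; have [x [px xX]] := rep X XQ; have [y [py yY]] := rep Y YQ.
  rewrite /g (gqE _ px) (gqE _ py) => /val_inj /linj E; subst y.
  apply/eqP; apply: contraT => nXY.
  by move: (dist X Y x x XQ YQ nXY xX yY); rewrite eqxx.
move=> X Y Z XQ YQ ZQ.
have [x [px xX]] := rep X XQ; have [y [py yY]] := rep Y YQ; have [z [pz zZ]] := rep Z ZQ.
rewrite /g (gqE _ px) (gqE _ py) (gqE _ pz) => lxy lyz.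
have nXY : X != Y by apply/eqP=> E; subst; move: px lxy; rewrite py => -[->]; rewrite ltnn.
have nYZ : Y != Z by apply/eqP=> E; subst; move: py lyz; rewrite pz => -[->]; rewrite ltnn.
have nXZ : X != Z by apply/eqP=> E; subst; move: px lxy lyz; rewrite pz => -[->] k1 k2; move: (ltn_trans k1 k2); rewrite ltnn.
have nxy := dist _ _ _ _ XQ YQ nXY xX yY.
have nyz := dist _ _ _ _ YQ ZQ nYZ yY zZ.
have nxz := dist _ _ _ _ XQ ZQ nXZ xX zZ.
have [T1 T2] := TC x y z (in_setT x) (in_setT y) (in_setT z) lxy lyz.
rewrite /mono (eq_sym y x) (eq_sym z y) (eq_sym z x) nxy nyz nxz /= (c_sym y x) (c_sym z y) (c_sym z x) in T1 T2.
rewrite (qcolE c px pz) (qcolE c px py) (qcolE c py pz).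
have ux : color_used (qcol c) Q (c x y) by rewrite -(qcolE c px py); apply: uQ.
have uy : color_used (qcol c) Q (c y z) by rewrite -(qcolE c py pz); apply: uQ.
have ue : color_used (qcol c) Q (c x z) by rewrite -(qcolE c px pz); apply: uQ.
have ui' : color_used (qcol c) Q i by apply: uQ.
case: (eqVneq (c x z) (c x y)) => e1; first by left.
case: (eqVneq (c x z) (c y z)) => e2; first by right.
exfalso.
case: (eqVneq (c x y) (c y z)) => exy; last first.
  by apply: (no3 _ _ _ ux uy ue exy); rewrite eq_sym.
case: (eqVneq (c x y) i) => xi.
  by move: e1; rewrite (eqP (T1 _ _)) ?xi ?eqxx // -exy xi.
case: (eqVneq (c x z) i) => ei.
  by move: ei; apply/eqP; apply: T2; rewrite -?exy xi.
have ex : c x y != c x z by rewrite eq_sym.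
exact: (no3 _ _ _ ux ue ui' ex ei xi).
Qed.

End V.

Unset Implicit Arguments.

Theorem theorem4p1 (T : finType) (c : T -> T -> nat)
  (c_sym : forall u v, c u v = c v u) (T_nonempty : 0 < #|T|) :
  let i_ := ecpg c [set: T] in
  let ii_ := forall S : {set T}, S != set0 -> ecpg c S in
  let iii_ := forall M : {set T}, strong_module c M ->
                ecpg (qcol c) (qverts c M) in
  let iv_ := forall M : {set T}, prime_module c M ->
                ecpg (qcol c) (qverts c M) /\
                (3 <= #|qverts c M| -> ncolors (qcol c) (qverts c M) = 2) in
  let v_ := (forall i, color_used c [set: T] i ->
                simple_perm_graph [set: T] (mono c i)) /\ ~ rainbow_triangle c in
  [/\ i_ <-> ii_, i_ <-> iii_, i_ <-> iv_ & i_ <-> v_].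
Proof.
cbv zeta.
have i_good : ecpg c [set: T] <-> exists f, good c [set: T] f.
  split; first exact: ecpg_good.
  by case=> f gf; apply: (good_ecpg c_sym _ gf); rewrite cardsT.
have i_ii : ecpg c [set: T] -> forall S : {set T}, S != set0 -> ecpg c S.
  move=> /i_good [f gf] S S0; apply: (good_ecpg c_sym (f := f)).
    by rewrite card_gt0.
  exact: good_sub (subsetT S) gf.
have ii_i : (forall S : {set T}, S != set0 -> ecpg c S) -> ecpg c [set: T].
  move=> h; apply: h; apply/set0Pn; case/card_gt0P: T_nonempty => x _; exists x.
  by rewrite inE.
have i_iii : ecpg c [set: T] -> forall M : {set T}, strong_module c M ->
    ecpg (qcol c) (qverts c M).
  move=> /i_good [f gf] M sM.
  apply: (good_ecpg (@qcol_sym _ c c_sym) (qverts_gt0 sM)); exact: (good_q gf sM).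
have iii_i : (forall M : {set T}, strong_module c M -> ecpg (qcol c) (qverts c M)) ->
    ecpg c [set: T].
  move=> h; apply/i_good.
  exact: (compose c_sym h (leqnn _) (strong_setT c T_nonempty)).
have i_v : ecpg c [set: T] -> (forall i, color_used c [set: T] i ->
    simple_perm_graph [set: T] (mono c i)) /\ ~ rainbow_triangle c.
  move=> hi; split.
    by case: hi => l [Hl H] i ui; exists l; split => //; exact: H.
  by case/i_good: hi => f gf; exact: good_nr gf.
have ivv := v_iv c_sym.
have iv_iii' := iv_iii c_sym.
split; split.
- exact: i_ii.
- exact: ii_i.
- exact: i_iii.
- exact: iii_i.
- by move=> hi; case: (i_v hi) => h1 h2; exact: ivv.
- by move=> h; apply: iii_i; apply: iv_iii'.
- exact: i_v.
- by case=> h1 h2; apply: iii_i; apply: iv_iii'; apply: ivv.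
Qed.
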